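(* Let $q$ be a prime power. For $n\in\{2,3\}$, the orbitals of $GU(n,q)$ acting on $\Phi(n,q)$ are exactly the $2(q^2-1)$ sets $S_{\alpha^i}$ and $R_{\alpha^i}$, $0\le i\le q^2-2$. For $n\ge 4$, the orbitals are exactly these sets together with $T$. Consequently the rank of the permutation group $(GU(n,q),\Phi(n,q))$ (equivalently, the number of relations of the Schurian association scheme $\mathcal X(GU(n,q),\Phi(n,q))$) is $2q^2-2$ if $n\in\{2,3\}$ and $2q^2-1$ if $n\ge 4$.
   Context: Let $q$ be a prime power, $V=\mathbb{F}_{q^2}^n$ with Hermitian form $\langle x,y\rangle=\sum_{k=1}^n x_k y_k^{\,q}$, $GU(n,q)=\{U\in GL_n(\mathbb{F}_{q^2}):U\bar U^T=I\}$ ($\bar U$ = entrywise $q$-th power) acting on the right on $V$, and on pairs by $(x,y)U=(xU,yU)$. $\Phi=\Phi(n,q)=\{x\in V\setminus\{0\}:\langle x,x\rangle=0\}$. An orbital is an orbit of the group on $\Phi\times\Phi$; the orbitals of a transitive group form the relations of the Schurian association scheme $\mathcal X(G,\Phi)$. Fix a primitive element $\alpha$ of $\mathbb{F}_{q^2}$; for $0\le i\le q^2-2$ let $S_{\alpha^i}=\{(x,y)\in\Phi\times\Phi:y=\alpha^ix\}$, $R_{\alpha^i}=\{(x,y)\in\Phi\times\Phi:\langle x,y\rangle=\alpha^i\}$, and $T=\{(x,y)\in\Phi\times\Phi:\langle x,y\rangle=0,\ y\notin\mathrm{Span}\{x\}\}$. *)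

(* Defs.v *)
From mathcomp Require Import all_boot all_algebra finalg.
Set Implicit Arguments. Unset Strict Implicit. Unset Printing Implicit Defensive.
Import GRing.Theory.
Local Open Scope ring_scope.

Section Unitary.
Variables (F : finFieldType) (q n : nat).

(* Hermitian form <x,y> = sum_k x_k y_k^q on F^n, F = F_{q^2}. *)
Definition herm (x y : 'rV[F]_n) : F := \sum_(k < n) x 0 k * (y 0 k) ^+ q.

Definition frobmx (U : 'M[F]_n) : 'M[F]_n := map_mx (fun a => a ^+ q) U.

Definition GU : {set 'M[F]_n} := [set U | U *m (frobmx U)^T == 1%:M].

Definition Phi : {set 'rV[F]_n} := [set x | (x != 0) && (herm x x == 0)].

Definition PhiPhi : {set 'rV[F]_n * 'rV[F]_n} := setX Phi Phi.

Definition orbit2 (p : 'rV[F]_n * 'rV[F]_n) : {set 'rV[F]_n * 'rV[F]_n} :=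
  [set (p.1 *m U, p.2 *m U) | U in GU].

Definition orbitals : {set {set 'rV[F]_n * 'rV[F]_n}} :=
  [set orbit2 p | p in PhiPhi].

Definition Srel (a : F) : {set 'rV[F]_n * 'rV[F]_n} :=
  [set p in PhiPhi | p.2 == a *: p.1].
Definition Rrel (a : F) : {set 'rV[F]_n * 'rV[F]_n} :=
  [set p in PhiPhi | herm p.1 p.2 == a].
Definition Trel : {set 'rV[F]_n * 'rV[F]_n} :=
  [set p in PhiPhi | (herm p.1 p.2 == 0) && ~~ [exists c : F, p.2 == c *: p.1]].

End Unitary.

(* Main.v *)
Require Import Defs.
From mathcomp Require Import all_boot all_algebra finalg all_fingroup all_solvable all_field zify.
Set Implicit Arguments. Unset Strict Implicit. Unset Printing Implicit Defensive.
Import GRing.Theory FinRing.Theory.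
Local Open Scope ring_scope.

Section Field.
Variables (F : finFieldType) (q : nat) (alpha : F).
Hypothesis hF : #|F| = (q ^ 2)%N.
Hypothesis hal : (q ^ 2 - 1)%N.-primitive_root alpha.

Lemma q_gt1 : (1 < q)%N.
Proof. have := finNzRing_gt1 F; rewrite hF; case: q => [|[|n]] //. Qed.

Lemma fqD (a b : F) : (a + b) ^+ q = a ^+ q + b ^+ q.
Proof.
apply: exprDn_pchar.
have [p pr_p chp] := finPcharP F.
have pab : (p.-abelem [set: F])%g := fin_ring_pchar_abelem chp.
have := abelem_pgroup pab; rewrite /pgroup cardsT hF => pn.
have : p.-nat q by apply: pnat_dvd pn; rewrite dvdn_mull.
by rewrite (eq_pnat _ (pcharf_eq chp)).
Qed.

Lemma fq0 : (0 : F) ^+ q = 0.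
Proof. by rewrite expr0n; have := q_gt1; case: q. Qed.

Lemma fqN (a : F) : (- a) ^+ q = - a ^+ q.
Proof. by apply/eqP; rewrite -subr_eq0 opprK -fqD addNr fq0. Qed.

Lemma fqB (a b : F) : (a - b) ^+ q = a ^+ q - b ^+ q.
Proof. by rewrite fqD fqN. Qed.

Lemma fqK (a : F) : (a ^+ q) ^+ q = a.
Proof. rewrite -exprM; have -> : (q * q = #|F|)%N by rewrite hF expnS expn1. exact: expf_card. Qed.

Lemma fq_inj : injective (fun a : F => a ^+ q).
Proof. exact: (@can_inj _ _ _ (fun a : F => a ^+ q) fqK). Qed.

Lemma fq_sum (I : Type) (r : seq I) (P : pred I) (G : I -> F) :
  (\sum_(i <- r | P i) G i) ^+ q = \sum_(i <- r | P i) (G i) ^+ q.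
Proof. exact: (big_morph (fun a : F => a ^+ q) fqD fq0). Qed.

Lemma q2_gt : (0 < q - 1 < q ^ 2 - 1)%N.
Proof. have := q_gt1; nia. Qed.

Lemma alpha_nz : alpha != 0.
Proof.
apply/eqP => a0; have := prim_expr_order hal; rewrite a0 expr0n.
have := q2_gt => /andP[_]; case: (q ^ 2 - 1)%N => //= n _ /eqP.
by rewrite eq_sym oner_eq0.
Qed.

Lemma pow_alpha (a : F) : a != 0 -> exists i : 'I_(q ^ 2 - 1), a = alpha ^+ i.
Proof.
move=> a0; have : a ^+ (q ^ 2 - 1) = 1.
  apply: (mulIf a0); rewrite mul1r -exprSr.
  have := q2_gt; rewrite -hF => h; rewrite subn1 prednK ?expf_card //; lia.
by case/(prim_rootP hal) => i ->; exists i.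
Qed.

Lemma mod_eq (i j : nat) : (i <= j)%N -> alpha ^+ i = alpha ^+ j -> ((q ^ 2 - 1) %| j - i)%N.
Proof. by move=> le /eqP; rewrite (eq_prim_root_expr hal) eq_sym eqn_mod_dvd. Qed.

Lemma alpha_notFq : alpha ^+ q != alpha.
Proof.
apply/eqP => h; have := mod_eq (i := 1) (j := q); rewrite expr1 h => /(_ (ltnW q_gt1) erefl).
have := q2_gt => /andP[h1 h2] /(dvdn_leq h1); lia.
Qed.

Lemma alpha_tr : alpha + alpha ^+ q != 0.
Proof.
rewrite addr_eq0; apply/eqP => h.
have h2 : alpha ^+ 2 = alpha ^+ (2 * q).
  by rewrite mulnC exprM {1}h sqrrN.
have := mod_eq (i := 2) (j := (2 * q)%N); rewrite h2 => /(_ _ erefl).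
have := q_gt1 => qg; have : (2 <= 2 * q)%N by lia.
move=> le /(_ le) /dvdn_leq; have : (0 < 2 * q - 2)%N by lia.
move=> p /(_ p); nia.
Qed.

Lemma norm_surj (c : F) : c != 0 -> c ^+ q = c -> exists mu : F, mu ^+ q * mu = c.
Proof.
move=> c0 cq; have [i0 ci0] := pow_alpha c0.
have [i ci] : exists i : nat, c = alpha ^+ i by exists i0.
clear i0 ci0.
have : ((q ^ 2 - 1) %| i * q - i)%N.
  apply: mod_eq; first by have := q_gt1; nia.
  by rewrite exprM -ci.
have -> : (q ^ 2 - 1 = (q - 1) * (q + 1))%N by have := q_gt1; nia.
have -> : (i * q - i = (q - 1) * i)%N by nia.
rewrite dvdn_pmul2l; last by have := q_gt1; lia.
case/dvdnP => k ik; exists (alpha ^+ k).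
by rewrite -exprM -exprD ci ik; congr (_ ^+ _); lia.
Qed.

Lemma trace_surj (c : F) : c ^+ q = c -> exists t : F, t + t ^+ q = c.
Proof.
move=> cq; set d := alpha + alpha ^+ q.
have dq : d ^+ q = d by rewrite /d fqD fqK addrC.
exists (c / d * alpha).
rewrite exprMn exprMn_comm; last exact: mulrC.
rewrite exprVn cq dq -mulrDr mulfVK //; exact: alpha_tr.
Qed.


Definition frm m k (A : 'M[F]_(m, k)) : 'M[F]_(m, k) := map_mx (fun a => a ^+ q) A.

Lemma frmK m k (A : 'M[F]_(m, k)) : frm (frm A) = A.
Proof. by apply/matrixP => i j; rewrite !mxE fqK. Qed.

Lemma frm_mul m k l (A : 'M[F]_(m, k)) (B : 'M[F]_(k, l)) : frm (A *m B) = frm A *m frm B.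
Proof. by apply/matrixP => i j; rewrite !mxE fq_sum; apply: eq_bigr => t _; rewrite !mxE exprMn. Qed.

Lemma frmD m k (A B : 'M[F]_(m, k)) : frm (A + B) = frm A + frm B.
Proof. by apply/matrixP => i j; rewrite !mxE fqD. Qed.

Lemma frmZ m k c (A : 'M[F]_(m, k)) : frm (c *: A) = c ^+ q *: frm A.
Proof. by apply/matrixP => i j; rewrite !mxE exprMn. Qed.

Lemma frm0 m k : frm (0 : 'M[F]_(m, k)) = 0.
Proof. by apply/matrixP => i j; rewrite !mxE fq0. Qed.

Lemma frm1 m : frm (1%:M : 'M[F]_m) = 1%:M.
Proof. by apply/matrixP => i j; rewrite !mxE; case: (i == j); rewrite ?expr1n ?fq0. Qed.

Lemma frm_tr m k (A : 'M[F]_(m, k)) : frm A^T = (frm A)^T.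
Proof. by apply/matrixP => i j; rewrite !mxE. Qed.

Lemma frm_row m k i (A : 'M[F]_(m, k)) : frm (row i A) = row i (frm A).
Proof. by apply/matrixP => a b; rewrite !mxE. Qed.

Lemma frm_eq0 m k (A : 'M[F]_(m, k)) : (frm A == 0) = (A == 0).
Proof.
apply/eqP/eqP => [h|->]; last exact: frm0.
by rewrite -(frmK A) h frm0.
Qed.

Lemma row_free_frm m k (A : 'M[F]_(m, k)) : row_free A -> row_free (frm A).
Proof.
move=> fA; apply: inj_row_free => v h.
have : frm v *m A = 0 *m A by rewrite mul0mx -[A]frmK -frm_mul h frm0.
by move/(row_free_inj fA)/eqP; rewrite frm_eq0 => /eqP.
Qed.

Definition sp h i := if (i < 2 * h)%N then (if odd i then i.-1 else i.+1) else i.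
Definition gg h (i j : nat) : F := (j == sp h i)%:R.

Lemma sp_id h i : (2 * h <= i)%N -> sp h i = i.
Proof. by rewrite /sp leqNgt => /negbTE ->. Qed.

Lemma sp_lt h i : (i < 2 * h)%N -> (sp h i < 2 * h)%N.
Proof.
move=> lt; rewrite /sp lt; case oi: (odd i); first lia.
have : i.+1 != (2 * h)%N.
  by apply/eqP => e; have := congr1 odd e; rewrite /= oi oddM.
lia.
Qed.

Lemma sp_inv h i : sp h (sp h i) = i.
Proof.
case: (ltnP i (2 * h)) => lt; last by rewrite !sp_id.
have lt' := sp_lt lt; rewrite /sp lt in lt' *; rewrite lt'; case oi: (odd i).
  have i0 : (0 < i)%N by case: i oi {lt lt'}.
  have -> : odd i.-1 = false by rewrite -[i]prednK // /= in oi; case: (odd i.-1) oi.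
  by rewrite prednK.
by rewrite /= oi.
Qed.

Lemma nondeg h k : (2 * h <= k)%N ->
  forall c : 'rV[F]_k, c *m \matrix_(i < k, j < k) gg h i j = 0 -> c = 0.
Proof.
move=> hk c hc; apply/rowP => i.
have si : (sp h i < k)%N.
  case: (ltnP i (2 * h)) => lt; last by rewrite sp_id.
  by have := sp_lt lt; lia.
have := congr1 (fun M : 'M[F]_(1, k) => M 0 (Ordinal si)) hc; rewrite !mxE (bigD1 i) // big1 ?addr0.
  by rewrite mxE /gg /= eqxx mulr1 addr0 => ->.
move=> l li; rewrite mxE /gg.
have -> : (sp h i == sp h l) = false.
  apply/negbTE; apply: contra li => /eqP e; apply/eqP/val_inj.
  by rewrite /= -(sp_inv h i) e sp_inv.
by rewrite mulr0.
Qed.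

Section Herm.
Variable n : nat.
Local Notation herm := (herm q (n := n)).

Lemma hermE (x y : 'rV[F]_n) : herm x y = (x *m (frm y)^T) 0 0.
Proof. by rewrite mxE; apply: eq_bigr => k _; rewrite !mxE. Qed.

Lemma herm_sym (x y : 'rV[F]_n) : herm y x = (herm x y) ^+ q.
Proof.
rewrite /Defs.herm fq_sum; apply: eq_bigr => k _; by rewrite exprMn fqK mulrC.
Qed.

Lemma hermDl (x y z : 'rV[F]_n) : herm (x + y) z = herm x z + herm y z.
Proof. by rewrite !hermE mulmxDl mxE. Qed.

Lemma hermZl c (x z : 'rV[F]_n) : herm (c *: x) z = c * herm x z.
Proof. by rewrite !hermE -scalemxAl mxE. Qed.

Lemma hermDr (x y z : 'rV[F]_n) : herm z (x + y) = herm z x + herm z y.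
Proof. by rewrite !hermE frmD linearD mulmxDr mxE. Qed.

Lemma hermZr c (x z : 'rV[F]_n) : herm z (c *: x) = c ^+ q * herm z x.
Proof. by rewrite !hermE frmZ linearZ /= -scalemxAr mxE. Qed.

Lemma herm0l (z : 'rV[F]_n) : herm 0 z = 0.
Proof. by rewrite hermE mul0mx mxE. Qed.

Lemma herm0r (z : 'rV[F]_n) : herm z 0 = 0.
Proof. by rewrite hermE frm0 trmx0 mulmx0 mxE. Qed.

Lemma hermNl (x z : 'rV[F]_n) : herm (- x) z = - herm x z.
Proof. by rewrite -scaleN1r hermZl mulN1r. Qed.

Lemma herm_delta (x : 'rV[F]_n) j : herm x (delta_mx 0 j) = x 0 j.
Proof.
rewrite /Defs.herm (bigD1 j) //= big1 ?addr0.
  by rewrite mxE !eqxx expr1n mulr1.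
by move=> k kj; rewrite mxE (negbTE kj) andbF fq0 mulr0.
Qed.

Lemma herm_nondeg (x : 'rV[F]_n) : (forall y, herm x y = 0) -> x = 0.
Proof. by move=> h; apply/rowP => j; rewrite -herm_delta h mxE. Qed.

Lemma hermq_self (x : 'rV[F]_n) : (herm x x) ^+ q = herm x x.
Proof. by rewrite -herm_sym. Qed.

Lemma herm_GU (U : 'M[F]_n) (x y : 'rV[F]_n) : U \in GU F q n ->
  herm (x *m U) (y *m U) = herm x y.
Proof.
rewrite inE => /eqP hU; rewrite !hermE frm_mul trmx_mul mulmxA -(mulmxA x).
by rewrite -[frm U]/(frobmx q U) hU mulmx1.
Qed.

Lemma GU_gram (B B' : 'M[F]_n) : B \in unitmx ->
  B *m (frm B)^T = B' *m (frm B')^T -> invmx B *m B' \in GU F q n.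
Proof.
move=> uB h; rewrite inE -[frobmx q _]/(frm _) frm_mul trmx_mul.
rewrite mulmxA -(mulmxA (invmx B)) -h mulmxA mulVmx // mul1mx.
by rewrite -trmx_mul -frm_mul mulVmx // frm1 trmx1.
Qed.

Lemma solve k (A : 'M[F]_(k, n)) (t : 'rV[F]_k) : row_free A ->
  exists z : 'rV[F]_n, forall i, herm z (row i A) = t 0 i.
Proof.
move=> fA; have fM : row_full (frm A)^T.
  by rewrite /row_full mxrank_tr; exact: row_free_frm.
have /submxP[z hz] := submx_full t fM.
exists z => i; rewrite hermE hz !mxE; apply: eq_bigr => j _; rewrite !mxE.
done.
Qed.

Lemma herm_row k (A : 'M[F]_(k, n)) (z : 'rV[F]_n) i :
  herm z (row i A) = (z *m (frm A)^T) 0 i.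
Proof. by rewrite hermE !mxE; apply: eq_bigr => j _; rewrite !mxE. Qed.

Lemma gram_entry k (A : 'M[F]_(k, n)) i j :
  (A *m (frm A)^T) i j = herm (row i A) (row j A).
Proof. by rewrite hermE !mxE; apply: eq_bigr => l _; rewrite !mxE. Qed.

Lemma ext k (A : 'M[F]_(k, n)) : (k < n)%N ->
  (forall c : 'rV[F]_k, c *m (A *m (frm A)^T) = 0 -> c = 0) ->
  exists v : 'rV[F]_n, (forall i, herm v (row i A) = 0) /\ herm v v = 1.
Proof.
move=> kn ndg.
set M := (frm A)^T.
have fA : row_free A.
  by apply: inj_row_free => c h; apply: ndg; rewrite mulmxA h mul0mx.
have [v0 [v0W v0nz]] : exists v0 : 'rV[F]_n, v0 *m M = 0 /\ v0 != 0.
  have Knz : kermx M != 0.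
    rewrite -mxrank_eq0 mxrank_ker; have := rank_leq_col M; lia.
  have [i Ki] : exists i, row i (kermx M) != 0.
    case: (pickP (fun i => row i (kermx M) != 0)) => [i Ki|none]; first by exists i.
    move/eqP: Knz; case; apply/row_matrixP => i; rewrite row0.
    by move/negbFE: (none i) => /eqP.
  by exists (row i (kermx M)); split => //; rewrite -row_mul mulmx_ker row0.
have [v [vW vv]] : exists v, v *m M = 0 /\ herm v v != 0.
  case: (boolP [exists v : 'rV[F]_n, (v *m M == 0) && (herm v v != 0)]).
    by case/existsP => v /andP[/eqP ? ?]; exists v.
  rewrite negb_exists => /forallP hall.
  have iso v : v *m M = 0 -> herm v v = 0.
    by move=> vM; have := hall v; rewrite vM eqxx /= negbK => /eqP.
  have pol v w : v *m M = 0 -> w *m M = 0 -> herm v w = 0.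
    move=> vM wM.
    have e1 : herm v w + (herm v w) ^+ q = 0.
      have := iso (v + w); rewrite mulmxDl vM wM addr0 => /(_ erefl).
      by rewrite !hermDl !hermDr iso // (iso w) // add0r addr0 (herm_sym v w).
    have e2 : alpha ^+ q * herm v w + alpha * (herm v w) ^+ q = 0.
      have := iso (v + alpha *: w); rewrite mulmxDl -scalemxAl vM wM scaler0 addr0.
      move=> /(_ erefl).
      by rewrite !hermDl !hermDr !hermZl !hermZr iso // (iso w) // (herm_sym v w) !mulr0 add0r addr0.
    have e1' : (herm v w) ^+ q = - herm v w.
      by apply/eqP; rewrite -subr_eq0 opprK addrC e1.
    move: e2; rewrite e1' mulrN -mulrBl => /eqP; rewrite mulf_eq0 subr_eq0.
    by rewrite (negbTE alpha_notFq) => /eqP.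
  have fB : row_free (col_mx A v0).
    apply: inj_row_free => c; rewrite -[c]hsubmxK mul_row_col => h.
    have h1 : lsubmx c = 0.
      apply: ndg; have := congr1 (mulmx^~ M) h.
      by rewrite /= mulmxDl -!mulmxA v0W mulmx0 addr0 mul0mx.
    rewrite h1 mul0mx add0r in h.
    have h2 : rsubmx c = 0.
      move: h; rewrite [rsubmx c]mx11_scalar mul_scalar_mx => /eqP.
      rewrite scaler_eq0 (negbTE v0nz) orbF => /eqP ->.
      by apply/matrixP => a b; rewrite !mxE; case: (a == b).
    by rewrite h1 h2 row_mx0.
  have [u hu] := solve (delta_mx 0 (rshift k (0 : 'I_1))) fB.
  have uW : u *m M = 0.
    apply/rowP => j; have := hu (lshift 1 j); rewrite rowKu herm_row => ->.
    by rewrite !mxE eq_lrshift andbF.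
  have := hu (rshift k 0); rewrite rowKd row_id pol // !mxE !eqxx /= => /eqP.
  by rewrite eq_sym oner_eq0.
have vq := hermq_self v.
have vq' : (herm v v)^-1 ^+ q = (herm v v)^-1 by rewrite exprVn vq.
have [mu hmu] := norm_surj (invr_neq0 vv) vq'.
exists (mu *: v); split.
  by move=> i; rewrite hermZl herm_row vW mxE mulr0.
by rewrite hermZl hermZr mulrA [mu * _]mulrC hmu mulVf.
Qed.

Definition gramQ h (Q : 'M[F]_(2 * h, n)) :=
  forall i j : 'I_(2 * h), herm (row i Q) (row j Q) = gg h i j.

Lemma build h (Q : 'M[F]_(2 * h, n)) : (2 * h <= n)%N -> gramQ Q ->
  exists B : 'M[F]_n, (forall (i : 'I_n) (l : 'I_(2 * h)), i = l :> nat -> row i B = row l Q)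
    /\ (forall i j : 'I_n, herm (row i B) (row j B) = gg h i j).
Proof.
move=> hn hQ.
pose B0 := \matrix_(i < n, j < n)
  match insub (val i) : option 'I_(2 * h) with Some l => Q l j | None => 0 end.
have B0row : forall (i : 'I_n) (l : 'I_(2 * h)), i = l :> nat -> row i B0 = row l Q.
  move=> i l e; apply/rowP => j; rewrite !mxE.
  case: insubP => [l' _ e'|np].
    by have -> : l' = l by apply: val_inj; rewrite /= e'; exact: e.
  by move: np; rewrite /= e ltn_ord.
suff : forall d, (2 * h + d <= n)%N -> exists B : 'M[F]_n,
    (forall (i : 'I_n) (l : 'I_(2 * h)), i = l :> nat -> row i B = row l Q)
    /\ forall i j : 'I_n, (i < 2 * h + d)%N -> (j < 2 * h + d)%N ->
         herm (row i B) (row j B) = gg h i j.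
  move=> /(_ (n - 2 * h)%N) []; first lia.
  move=> B [h1 h2]; exists B; split => // i j; apply: h2.
    by have := ltn_ord i; lia.
  by have := ltn_ord j; lia.
elim => [|d IH] hd.
  exists B0; split => // i j hi hj; rewrite addn0 in hi hj.
  by rewrite (B0row i (Ordinal hi)) // (B0row j (Ordinal hj)) //; exact: hQ.
have kn : (2 * h + d < n)%N by rewrite addnS in hd.
have [B [hB1 hB2]] := IH (ltnW kn).
pose A : 'M[F]_(2 * h + d, n) := \matrix_(i < 2 * h + d, j < n) B (widen_ord (ltnW kn) i) j.
have rowA : forall i, row i A = row (widen_ord (ltnW kn) i) B.
  by move=> i; apply/rowP => j; rewrite !mxE.
have ndgA : forall c : 'rV[F]_(2 * h + d), c *m (A *m (frm A)^T) = 0 -> c = 0.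
  move=> c hc; apply: (nondeg (h := h) (leq_addr d _)); rewrite -hc; congr (_ *m _).
  by apply/matrixP => i j; rewrite gram_entry !rowA hB2 ?mxE //=.
have [v [vperp vv]] := ext kn ndgA.
pose B' := \matrix_(i < n, j < n) if (i : nat) == (2 * h + d)%N then v 0 j else B i j.
have rowB' : forall i : 'I_n, row i B' = if (i : nat) == (2 * h + d)%N then v else row i B.
  by move=> i; apply/rowP => j; rewrite !mxE; case: (_ == _); rewrite ?mxE.
have perp : forall j : 'I_n, (j < 2 * h + d)%N -> herm v (row j B) = 0.
  move=> j jk; rewrite -(vperp (Ordinal jk)) rowA; congr (herm _ (row _ _)).
  exact: val_inj.
exists B'; split.
  move=> i l e; rewrite rowB' e.
  have -> : ((l : nat) == (2 * h + d)%N) = false.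
    by apply/negbTE/eqP => e'; have := ltn_ord l; lia.
  exact: hB1.
move=> i j hi hj; rewrite !rowB' addnS in hi hj *.
case: (eqVneq (i : nat) (2 * h + d)%N) => ei; case: (eqVneq (j : nat) (2 * h + d)%N) => ej.
- by rewrite /gg ei ej sp_id ?eqxx //; lia.
- rewrite perp; last lia.
  rewrite /gg ei sp_id; last lia.
  by rewrite (negbTE ej).
- rewrite herm_sym perp; last lia.
  rewrite fq0 /gg ej.
  have : (sp h i < 2 * h + d)%N.
    case: (ltnP i (2 * h)) => lt; last by rewrite sp_id //; lia.
    by have := sp_lt lt; lia.
  by move=> lt; rewrite (gtn_eqF lt).
- by apply: hB2; lia.
Qed.

Lemma trans h (Q Q' : 'M[F]_(2 * h, n)) : (2 * h <= n)%N -> gramQ Q -> gramQ Q' ->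
  exists U, U \in GU F q n /\ forall l, row l Q *m U = row l Q'.
Proof.
move=> hn hQ hQ'.
have [B [hB1 hB2]] := build hn hQ.
have [B' [hB1' hB2']] := build hn hQ'.
have gB : B *m (frm B)^T = \matrix_(i < n, j < n) gg h i j.
  by apply/matrixP => i j; rewrite gram_entry hB2 mxE.
have gB' : B' *m (frm B')^T = \matrix_(i < n, j < n) gg h i j.
  by apply/matrixP => i j; rewrite gram_entry hB2' mxE.
have uB : B \in unitmx.
  rewrite -row_free_unit; apply: inj_row_free => c hc.
  by apply: (nondeg hn); rewrite -gB mulmxA hc mul0mx.
exists (invmx B *m B'); split; first by apply: GU_gram => //; rewrite gB gB'.
move=> l; have li : (l < n)%N by apply: leq_trans (ltn_ord l) hn.
rewrite -(hB1 (Ordinal li) l) // -(hB1' (Ordinal li) l) //.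
by rewrite -row_mul mulmxA mulmxV // mul1mx.
Qed.

Definition mkQ k (f : 'I_k -> 'rV[F]_n) : 'M[F]_(k, n) := \matrix_(i < k, j < n) f i 0 j.

Lemma row_mkQ k (f : 'I_k -> 'rV[F]_n) i : row i (mkQ f) = f i.
Proof. by apply/rowP => j; rewrite !mxE. Qed.

Lemma nz_entry (x : 'rV[F]_n) : x != 0 -> exists j, x 0 j != 0.
Proof.
move=> xnz; case: (pickP (fun j => x 0 j != 0)) => [j h|none]; first by exists j.
by move/eqP: xnz; case; apply/rowP => j; rewrite mxE; move/negbFE: (none j) => /eqP.
Qed.

Lemma fix_iso (z x : 'rV[F]_n) : herm z x = 1 -> herm x x = 0 ->
  exists t : F, herm (z + t *: x) (z + t *: x) = 0.
Proof.
move=> zx xx.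
have xz : herm x z = 1 by rewrite herm_sym zx expr1n.
have zzq : (- herm z z) ^+ q = - herm z z by rewrite fqN hermq_self.
have [t ht] := trace_surj zzq.
exists t; rewrite !hermDl !hermDr !hermZl !hermZr xx zx xz !mulr0 !mulr1 addr0.
by rewrite -addrA [t ^+ q + t]addrC ht subrr.
Qed.

Lemma partner (x : 'rV[F]_n) : x != 0 -> herm x x = 0 ->
  exists y, herm y y = 0 /\ herm x y = 1.
Proof.
move=> xnz xx; have [j xj] := nz_entry xnz.
pose z : 'rV[F]_n := ((x 0 j)^-1) ^+ q *: delta_mx 0 j.
have xz : herm x z = 1 by rewrite /z hermZr fqK herm_delta mulVf.
have zx : herm z x = 1 by rewrite herm_sym xz expr1n.
have [t ht] := fix_iso zx xx.
exists (z + t *: x); split => //.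
by rewrite hermDr hermZr xx mulr0 addr0 xz.
Qed.

Definition hyp1 (x y : 'rV[F]_n) := [/\ herm x x = 0, herm y y = 0 & herm x y = 1].

Definition f2 (x y : 'rV[F]_n) (i : 'I_(2 * 1)) := if (i : nat) == 0%N then x else y.

Lemma gram2 x y : hyp1 x y -> gramQ (mkQ (f2 x y)).
Proof.
case=> xx yy xy; have yx : herm y x = 1 by rewrite herm_sym xy expr1n.
move=> i j; rewrite !row_mkQ /f2.
by case: i => [[|[|//]] ?]; case: j => [[|[|//]] ?]; rewrite /gg /sp /=.
Qed.

Lemma hyp1_trans x y x' y' : (2 <= n)%N -> hyp1 x y -> hyp1 x' y' ->
  exists U, U \in GU F q n /\ x *m U = x' /\ y *m U = y'.
Proof.
move=> n2 h h'.
have [U [UG hU]] := trans (n2 : (2 * 1 <= n)%N) (gram2 h) (gram2 h').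
exists U; split => //; split.
  by have := hU (Ordinal (isT : (0 < 2 * 1)%N)); rewrite !row_mkQ.
by have := hU (Ordinal (isT : (1 < 2 * 1)%N)); rewrite !row_mkQ.
Qed.

Definition hyp2 (x z y w : 'rV[F]_n) :=
  [/\ hyp1 x z, hyp1 y w & [/\ herm x y = 0, herm x w = 0, herm z y = 0 & herm z w = 0]].

Definition f4 (x z y w : 'rV[F]_n) (i : 'I_(2 * 2)) :=
  match (i : nat) with 0 => x | 1 => z | 2 => y | _ => w end.

Lemma gram4 x z y w : hyp2 x z y w -> gramQ (mkQ (f4 x z y w)).
Proof.
case=> [[xx zz xz] [yy ww yw] [xy xw zy zw]].
have zx : herm z x = 1 by rewrite herm_sym xz expr1n.
have wy : herm w y = 1 by rewrite herm_sym yw expr1n.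
have yx : herm y x = 0 by rewrite herm_sym xy fq0.
have wx : herm w x = 0 by rewrite herm_sym xw fq0.
have yz : herm y z = 0 by rewrite herm_sym zy fq0.
have wz : herm w z = 0 by rewrite herm_sym zw fq0.
move=> i j; rewrite !row_mkQ /f4.
by case: i => [[|[|[|[|//]]]] ?]; case: j => [[|[|[|[|//]]]] ?]; rewrite /gg /sp /=.
Qed.

Lemma hyp2_trans x z y w x' z' y' w' : (4 <= n)%N -> hyp2 x z y w -> hyp2 x' z' y' w' ->
  exists U, U \in GU F q n /\ x *m U = x' /\ y *m U = y'.
Proof.
move=> n4 h h'.
have [U [UG hU]] := trans (n4 : (2 * 2 <= n)%N) (gram4 h) (gram4 h').
exists U; split => //; split.
  by have := hU (Ordinal (isT : (0 < 2 * 2)%N)); rewrite !row_mkQ.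
by have := hU (Ordinal (isT : (2 < 2 * 2)%N)); rewrite !row_mkQ.
Qed.

Lemma gram_le h (Q : 'M[F]_(2 * h, n)) : gramQ Q -> (2 * h <= n)%N.
Proof.
move=> hQ; have fQ : row_free Q.
  apply: inj_row_free => c hc; apply: (nondeg (leqnn _)).
  have -> : \matrix_(i < 2 * h, j < 2 * h) gg h i j = Q *m (frm Q)^T.
    by apply/matrixP => i j; rewrite gram_entry hQ mxE.
  by rewrite mulmxA hc mul0mx.
by move: fQ; rewrite /row_free => /eqP <-; apply: rank_leq_col.
Qed.

Lemma ord2_cases (i : 'I_(2 * 1)) : i = ord0 \/ i = lift ord0 ord0.
Proof. by case: i => [[|[|//]] ?]; [left|right]; apply: val_inj. Qed.

Lemma ord3_cases (i : 'I_3) : [\/ i = ord0, i = lift ord0 ord0 | i = lift ord0 (lift ord0 ord0)].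
Proof. by case: i => [[|[|[|//]]] ?]; [apply: Or31|apply: Or32|apply: Or33]; apply: val_inj. Qed.

Lemma sum2 (c : 'rV[F]_(2 * 1)) (f : 'I_(2 * 1) -> 'rV[F]_n) :
  c *m mkQ f = c 0 ord0 *: f ord0 + c 0 (lift ord0 ord0) *: f (lift ord0 ord0).
Proof. by rewrite mulmx_sum_row !big_ord_recl big_ord0 addr0 !row_mkQ. Qed.

Lemma sum3 (c : 'rV[F]_3) (f : 'I_3 -> 'rV[F]_n) :
  c *m mkQ f = c 0 ord0 *: f ord0 + c 0 (lift ord0 ord0) *: f (lift ord0 ord0)
    + c 0 (lift ord0 (lift ord0 ord0)) *: f (lift ord0 (lift ord0 ord0)).
Proof. by rewrite mulmx_sum_row !big_ord_recl big_ord0 addr0 !row_mkQ addrA. Qed.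

Lemma indep2 (x y : 'rV[F]_n) (a b : F) : x != 0 -> (forall c, y != c *: x) ->
  a *: x + b *: y = 0 -> a = 0 /\ b = 0.
Proof.
move=> xnz ny h.
have b0 : b = 0.
  apply/eqP; apply: contraT => bnz; case/eqP: (ny (- (b^-1 * a))).
  have : b *: y = - (a *: x) by apply/eqP; rewrite -addr_eq0 addrC h.
  move=> /(congr1 (fun v => b^-1 *: v)); rewrite scalerK // => ->.
  by rewrite scalerN scalerA scaleNr.
split => //; move: h; rewrite b0 scale0r addr0 => /eqP.
by rewrite scaler_eq0 (negbTE xnz) orbF => /eqP.
Qed.

Lemma T_config (x y : 'rV[F]_n) : x != 0 -> herm x x = 0 -> herm y y = 0 ->
  herm x y = 0 -> (forall c, y != c *: x) -> exists z w, hyp2 x z y w.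
Proof.
move=> xnz xx yy xy ny.
have yx : herm y x = 0 by rewrite herm_sym xy fq0.
have rf2 : row_free (mkQ (f2 x y)).
  apply: inj_row_free => c; rewrite sum2 /f2 /= => /(indep2 xnz ny) [h0 h1].
  by apply/rowP => i; rewrite mxE; case: (ord2_cases i) => ->.
have [z0 hz0] := solve (delta_mx 0 ord0) rf2.
have z0x : herm z0 x = 1 by have := hz0 ord0; rewrite row_mkQ /f2 /= mxE.
have z0y : herm z0 y = 0 by have := hz0 (lift ord0 ord0); rewrite row_mkQ /f2 /= mxE.
have [t ht] := fix_iso z0x xx.
pose z := z0 + t *: x.
have zx : herm z x = 1 by rewrite hermDl hermZl xx mulr0 addr0.
have zy : herm z y = 0 by rewrite hermDl hermZl xy mulr0 addr0 z0y.
pose f3 := fun i : 'I_3 => match (i : nat) with 0 => x | 1 => z | _ => y end.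
have rf3 : row_free (mkQ f3).
  apply: inj_row_free => c; rewrite sum3 /f3 /= => h.
  have c1 : c 0 (lift ord0 ord0) = 0.
    have := congr1 (fun v => herm v x) h; rewrite /= !hermDl !hermZl xx yx zx herm0l.
    by rewrite !mulr0 mulr1 add0r addr0.
  move: h; rewrite c1 scale0r addr0 => /(indep2 xnz ny) [h0 h2].
  by apply/rowP => i; rewrite mxE; case: (ord3_cases i) => ->.
have [w0 hw0] := solve (delta_mx 0 (lift ord0 (lift ord0 ord0))) rf3.
have w0x : herm w0 x = 0 by have := hw0 ord0; rewrite row_mkQ /f3 /= mxE.
have w0z : herm w0 z = 0 by have := hw0 (lift ord0 ord0); rewrite row_mkQ /f3 /= mxE.
have w0y : herm w0 y = 1 by have := hw0 (lift ord0 (lift ord0 ord0)); rewrite row_mkQ /f3 /= mxE.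
have [s hs] := fix_iso w0y yy.
pose w := w0 + s *: y.
have wy : herm w y = 1 by rewrite hermDl hermZl yy mulr0 addr0.
have wx : herm w x = 0 by rewrite hermDl hermZl yx mulr0 addr0.
have wz : herm w z = 0.
  by rewrite hermDl hermZl w0z (herm_sym z y) zy fq0 mulr0 addr0.
exists z, w; split; split => //.
- by rewrite herm_sym zx expr1n.
- by rewrite herm_sym wy expr1n.
- by rewrite herm_sym wx fq0.
- by rewrite herm_sym wz fq0.
Qed.

End Herm.

Section Main.
Variable n : nat.
Hypothesis n2 : (2 <= n)%N.
Local Notation herm := (herm q (n := n)).
Local Notation pair := ('rV[F]_n * 'rV[F]_n)%type.

Lemma GU_unit U : U \in GU F q n -> U \in unitmx.
Proof. by rewrite inE => /eqP /mulmx1_unit []. Qed.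

Lemma GU_inj U (x y : 'rV[F]_n) : U \in GU F q n -> x *m U = y *m U -> x = y.
Proof.
move=> /GU_unit uU h; by rewrite -(mulmxK uU x) h mulmxK.
Qed.

Lemma inPhi (x : 'rV[F]_n) : (x \in Phi F q n) = (x != 0) && (herm x x == 0).
Proof. by rewrite inE. Qed.

Lemma Phi_GU U x : U \in GU F q n -> x \in Phi F q n -> x *m U \in Phi F q n.
Proof.
move=> UG; rewrite !inPhi herm_GU // => /andP[xnz ->]; rewrite andbT.
by apply: contra xnz => /eqP h; apply/eqP; apply: (GU_inj UG); rewrite h mul0mx.
Qed.

Lemma PhiPhi_GU U (p : pair) : U \in GU F q n -> p \in PhiPhi F q n ->
  (p.1 *m U, p.2 *m U) \in PhiPhi F q n.
Proof. by case: p => x y UG; rewrite /PhiPhi !in_setX /= => /andP[h1 h2]; rewrite !Phi_GU. Qed.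

Lemma orbit_eq (p : pair) (R : {set pair}) :
  (forall U p', U \in GU F q n -> p' \in R -> (p'.1 *m U, p'.2 *m U) \in R) ->
  p \in R ->
  (forall p', p' \in R -> exists2 U, U \in GU F q n & p' = (p.1 *m U, p.2 *m U)) ->
  orbit2 q p = R.
Proof.
move=> inv pR tr; apply/setP => r; apply/imsetP/idP.
  by case=> U UG ->; apply: inv.
by move/tr => [U UG ->]; exists U.
Qed.

Lemma Srel_inv a U (p : pair) : U \in GU F q n -> p \in Srel q n a ->
  (p.1 *m U, p.2 *m U) \in Srel q n a.
Proof.
move=> UG; rewrite in_set => /andP[pP /eqP e]; rewrite in_set (PhiPhi_GU UG pP) /= e.
by rewrite -scalemxAl eqxx.
Qed.

Lemma Rrel_inv a U (p : pair) : U \in GU F q n -> p \in Rrel q n a ->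
  (p.1 *m U, p.2 *m U) \in Rrel q n a.
Proof.
by move=> UG; rewrite in_set => /andP[pP e]; rewrite in_set (PhiPhi_GU UG pP) /= herm_GU.
Qed.

Lemma Trel_inv U (p : pair) : U \in GU F q n -> p \in Trel F q n ->
  (p.1 *m U, p.2 *m U) \in Trel F q n.
Proof.
move=> UG; rewrite in_set => /and3P[pP e nm]; rewrite in_set (PhiPhi_GU UG pP) /= herm_GU // e /=.
apply: contra nm => /existsP[c /eqP h]; apply/existsP; exists c; apply/eqP.
by apply: (GU_inj UG); rewrite h scalemxAl.
Qed.

Lemma Srel_orbit a (p : pair) : p \in Srel q n a -> orbit2 q p = Srel q n a.
Proof.
move=> pS; apply: orbit_eq => //; first by move=> *; exact: Srel_inv.
move: pS; case: p => x ax; rewrite in_set /PhiPhi in_setX /= => /andP[/andP[xP _] /eqP ->].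
case=> x' ax'; rewrite in_set /PhiPhi in_setX /= => /andP[/andP[xP' _] /eqP ->].
move: xP xP'; rewrite !inPhi => /andP[xnz /eqP xx] /andP[xnz' /eqP xx'].
have [y [yy xy]] := partner xnz xx.
have [y' [yy' xy']] := partner xnz' xx'.
have [U [UG [hx _]]] := hyp1_trans n2 (And3 xx yy xy) (And3 xx' yy' xy').
by exists U => //; rewrite -scalemxAl hx.
Qed.

Lemma Rrel_orbit a (p : pair) : a != 0 -> p \in Rrel q n a -> orbit2 q p = Rrel q n a.
Proof.
move=> anz pR; apply: orbit_eq => //; first by move=> *; exact: Rrel_inv.
have key : forall x y, x \in Phi F q n -> y \in Phi F q n -> herm x y = a ->
    hyp1 x ((a^-1) ^+ q *: y) /\ y = a ^+ q *: ((a^-1) ^+ q *: y).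
  move=> x y; rewrite !inPhi => /andP[_ /eqP xx] /andP[_ /eqP yy] xy.
  split; first split => //.
    by rewrite hermZl hermZr yy !mulr0.
    by rewrite hermZr fqK xy mulVf.
  by rewrite scalerA -exprMn mulfV // expr1n scale1r.
move: pR; case: p => x y; rewrite in_set /PhiPhi in_setX /= => /andP[/andP[xP yP] /eqP xy].
case=> x' y'; rewrite in_set /PhiPhi in_setX /= => /andP[/andP[xP' yP'] /eqP xy'].
have [h1 e1] := key _ _ xP yP xy.
have [h1' e1'] := key _ _ xP' yP' xy'.
have [U [UG [hx hy]]] := hyp1_trans n2 h1 h1'.
exists U => //; have -> : y *m U = y' by rewrite e1 -scalemxAl hy -e1'.
by rewrite hx.
Qed.

Lemma Trel_config (p : pair) : p \in Trel F q n ->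
  exists z w, hyp2 p.1 z p.2 w.
Proof.
case: p => x y; rewrite in_set /PhiPhi in_setX /= => /and3P[/andP[xP yP] /eqP xy nm].
move: xP yP; rewrite !inPhi => /andP[xnz /eqP xx] /andP[_ /eqP yy].
apply: T_config => // c; apply: contra nm => /eqP ->.
by apply/existsP; exists c.
Qed.

Lemma Trel_n4 (p : pair) : p \in Trel F q n -> (4 <= n)%N.
Proof.
by move/Trel_config => [z [w h]]; exact: (gram_le (gram4 h)).
Qed.

Lemma Trel_orbit (p : pair) : p \in Trel F q n -> orbit2 q p = Trel F q n.
Proof.
move=> pT; have n4 := Trel_n4 pT.
apply: orbit_eq => //; first by move=> *; exact: Trel_inv.
have [z [w h]] := Trel_config pT.
move=> p' /Trel_config [z' [w' h']].
have [U [UG [hx hy]]] := hyp2_trans n4 h h'.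
by exists U => //; rewrite hx hy; case: (p').
Qed.

Lemma iso_vec (i j : 'I_n) : i != j -> exists x : 'rV[F]_n,
  [/\ herm x x = 0, x 0 i = 1 & forall k, k != i -> k != j -> x 0 k = 0].
Proof.
move=> ij.
have m1 : (-1 : F) != 0 by rewrite oppr_eq0 oner_eq0.
have m1q : (-1 : F) ^+ q = -1 by rewrite fqN expr1n.
have [mu hmu] := norm_surj m1 m1q.
exists (delta_mx 0 i + mu *: delta_mx 0 j); split.
- rewrite !hermDl !hermDr !hermZl !hermZr !herm_delta !mxE !eqxx /=.
  have ij1 : (i == j) = false by apply/negbTE.
  have ij2 : (j == i) = false by rewrite eq_sym; apply/negbTE.
  rewrite ij1 ij2.
  by rewrite /= !mulr0 !mulr1 addr0 add0r mulrC hmu subrr.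
- have ij1 : (i == j) = false by apply/negbTE.
  by rewrite !mxE !eqxx /= ij1 mulr0 addr0.
- by move=> k ki kj; rewrite !mxE (negbTE ki) (negbTE kj) /= mulr0 addr0.
Qed.

Definition i0 : 'I_n := Ordinal (ltnW n2).
Definition i1 : 'I_n := Ordinal n2.

Lemma x0_ex : exists x : 'rV[F]_n, x != 0 /\ herm x x = 0.
Proof.
have ij : i0 != i1 by [].
have [x [xx x1 _]] := iso_vec ij; exists x; split => //.
by apply/eqP => x0; move: x1; rewrite x0 mxE => /eqP; rewrite eq_sym oner_eq0.
Qed.

Lemma Srel_ne (a : F) : a != 0 -> exists p, p \in Srel q n a.
Proof.
move=> anz; have [x [xnz xx]] := x0_ex.
exists (x, a *: x); rewrite in_set /PhiPhi in_setX /= !inPhi xnz xx eqxx /=.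
by rewrite scaler_eq0 (negbTE anz) xnz hermZl hermZr xx !mulr0 !eqxx.
Qed.

Lemma Rrel_ne (b : F) : b != 0 -> exists p, p \in Rrel q n b.
Proof.
move=> bnz; have [x [xnz xx]] := x0_ex.
have [y [yy xy]] := partner xnz xx.
have ynz : y != 0 by apply/eqP => y0; move: xy; rewrite y0 herm0r => /eqP; rewrite eq_sym oner_eq0.
exists (x, b ^+ q *: y); rewrite in_set /PhiPhi in_setX /= !inPhi xnz xx eqxx /=.
rewrite scaler_eq0 expf_eq0 (negbTE bnz) andbF ynz /= hermZl hermZr yy !mulr0 eqxx /=.
by rewrite hermZr fqK xy mulr1.
Qed.

Lemma Trel_ne : (4 <= n)%N -> exists p, p \in Trel F q n.
Proof.
move=> n4.
pose j0 : 'I_n := Ordinal (ltnW (ltnW (ltnW n4))).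
pose j1 : 'I_n := Ordinal (ltnW (ltnW n4)).
pose j2 : 'I_n := Ordinal (ltnW n4).
pose j3 : 'I_n := Ordinal n4.
have j01 : j0 != j1 by [].
have j23 : j2 != j3 by [].
have [x [xx x1 xs]] := iso_vec j01.
have [y [yy y1 ys]] := iso_vec j23.
have xnz : x != 0.
  by apply/eqP => x0; move: x1; rewrite x0 mxE => /eqP; rewrite eq_sym oner_eq0.
have ynz : y != 0.
  by apply/eqP => y0; move: y1; rewrite y0 mxE => /eqP; rewrite eq_sym oner_eq0.
exists (x, y); rewrite in_set /PhiPhi in_setX /= !inPhi xnz xx ynz yy eqxx /=.
apply/andP; split.
  rewrite /Defs.herm big1 // => k _.
  case: (eqVneq k j0) => [->|k0]; first by rewrite ys // fq0 mulr0.
  case: (eqVneq k j1) => [->|k1]; first by rewrite ys // fq0 mulr0.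
  by rewrite xs // mul0r.
apply/existsP => [[c /eqP e]].
have := congr1 (fun v : 'rV[F]_n => v 0 j2) e; rewrite /= y1 mxE xs // mulr0.
by move/eqP; rewrite oner_eq0.
Qed.

Lemma alpha_inj (i j : 'I_(q ^ 2 - 1)) : alpha ^+ i = alpha ^+ j -> i = j.
Proof.
move/eqP; rewrite (eq_prim_root_expr hal) !modn_small // => /eqP h; exact: val_inj.
Qed.

Lemma alpha_pow_nz (i : nat) : alpha ^+ i != 0.
Proof. exact: (expf_neq0 _ alpha_nz). Qed.

Local Notation Sfam := [set Srel q n (alpha ^+ i) | i : 'I_(q ^ 2 - 1)].
Local Notation Rfam := [set Rrel q n (alpha ^+ i) | i : 'I_(q ^ 2 - 1)].
Local Notation Tx := (if (4 <= n)%N then [set Trel F q n] else set0).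

Lemma main_eq : orbitals F q n = Sfam :|: Rfam :|: Tx.
Proof.
apply/setP => X; apply/imsetP/idP.
  case=> p pP ->.
  case: (boolP [exists c : F, p.2 == c *: p.1]) => [/existsP[c /eqP e] | nm].
    have c0 : c != 0.
      apply/eqP => c0; move: pP; case: (p) e => x y /= ->.
      by rewrite c0 scale0r /PhiPhi in_setX /= !inPhi eqxx andbF.
    have [i ci] := pow_alpha c0.
    have pS : p \in Srel q n (alpha ^+ i) by rewrite in_set pP /= -ci e eqxx.
    rewrite (Srel_orbit pS) !in_setU; apply/orP; left; apply/orP; left.
    by apply/imsetP; exists i.
  case: (eqVneq (herm p.1 p.2) 0) => h0.
    have pT : p \in Trel F q n by rewrite in_set pP h0 eqxx nm.
    by rewrite (Trel_orbit pT) (Trel_n4 pT) !in_setU in_set1 eqxx orbT.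
  have [i ci] := pow_alpha h0.
  have pR : p \in Rrel q n (alpha ^+ i) by rewrite in_set pP /= -ci eqxx.
  rewrite (Rrel_orbit (alpha_pow_nz i) pR) !in_setU; apply/orP; left; apply/orP; right.
  by apply/imsetP; exists i.
rewrite !in_setU => /orP[/orP[]|].
- case/imsetP => i _ ->; have [p pS] := Srel_ne (alpha_pow_nz i).
  exists p; last by rewrite (Srel_orbit pS).
  by move: pS; rewrite in_set => /andP[].
- case/imsetP => i _ ->; have [p pR] := Rrel_ne (alpha_pow_nz i).
  exists p; last by rewrite (Rrel_orbit (alpha_pow_nz i) pR).
  by move: pR; rewrite in_set => /andP[].
- case: ifP => [n4|]; last by rewrite in_set0.
  rewrite in_set1 => /eqP ->; have [p pT] := Trel_ne n4.
  exists p; last by rewrite (Trel_orbit pT).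
  by move: pT; rewrite in_set => /and3P[].
Qed.

Lemma disj (T : finType) (A B : {set T}) :
  (forall X, X \in A -> X \in B -> False) -> A :&: B = set0.
Proof.
move=> h; apply/setP => X; rewrite inE in_set0; apply/negbTE/andP => [[]].
exact: h.
Qed.

Lemma Srel_mem (a : F) (x y : 'rV[F]_n) :
  ((x, y) \in Srel q n a) = [&& x \in Phi F q n, y \in Phi F q n & y == a *: x].
Proof. by rewrite in_set /PhiPhi in_setX /= andbA. Qed.

Lemma Rrel_mem (a : F) (x y : 'rV[F]_n) :
  ((x, y) \in Rrel q n a) = [&& x \in Phi F q n, y \in Phi F q n & herm x y == a].
Proof. by rewrite in_set /PhiPhi in_setX /= andbA. Qed.

Lemma main_card : #|orbitals F q n| = (if (n <= 3)%N then 2 * q ^ 2 - 2 else 2 * q ^ 2 - 1)%N.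
Proof.
rewrite main_eq.
have cS : #|Sfam| = (q ^ 2 - 1)%N.
  rewrite card_imset ?cardsT ?card_ord // => i j e.
  have [[x y] pS] := Srel_ne (alpha_pow_nz i).
  have pS' := pS; rewrite e in pS'.
  move: pS pS'; rewrite !Srel_mem inPhi => /and3P[/andP[xnz _] _ /eqP ->] /and3P[_ _].
  rewrite -subr_eq0 -scalerBl scaler_eq0 subr_eq0 (negbTE xnz) orbF.
  by move/eqP/alpha_inj.
have cR : #|Rfam| = (q ^ 2 - 1)%N.
  rewrite card_imset ?cardsT ?card_ord // => i j e.
  have [[x y] pR] := Rrel_ne (alpha_pow_nz i).
  have pR' := pR; rewrite e in pR'.
  move: pR pR'; rewrite !Rrel_mem => /and3P[_ _ /eqP e1] /and3P[_ _ /eqP e2].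
  by apply: alpha_inj; rewrite -e1 -e2.
have SR : Sfam :&: Rfam = set0.
  apply: disj => X /imsetP[i _ ->] /imsetP[j _ e].
  have [[x y] pS] := Srel_ne (alpha_pow_nz i).
  have pS' := pS; rewrite e in pS'.
  move: pS pS'; rewrite Srel_mem Rrel_mem inPhi => /and3P[/andP[_ /eqP xx] _ /eqP ->].
  case/and3P => _ _; rewrite hermZr xx mulr0 eq_sym.
  by rewrite (negbTE (alpha_pow_nz j)).
have q1 : (1 <= q ^ 2)%N by rewrite expn_gt0; have := q_gt1; lia.
case: (leqP 4 n) => n4.
  have STx : (Sfam :|: Rfam) :&: [set Trel F q n] = set0.
    apply: disj => X hA; rewrite in_set1 => /eqP eX; move: hA; rewrite {X}eX.
    have [[x y] pT] := Trel_ne n4.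
    move: (pT); rewrite in_set => /and3P[_ /eqP h0 nm].
    rewrite in_setU => /orP[] /imsetP[i _ e]; move: pT; rewrite e.
      rewrite Srel_mem => /and3P[_ _ e']; case/existsP: nm; exists (alpha ^+ i).
      exact: e'.
    rewrite Rrel_mem => /and3P[_ _]; rewrite /= in h0; rewrite h0 eq_sym.
    by rewrite (negbTE (alpha_pow_nz i)).
  rewrite cardsU STx cards0 subn0 cards1 cardsU SR cards0 subn0 cS cR.
  have : ~~ (n <= 3)%N by rewrite -ltnNge.
  by move/negbTE => ->; lia.
rewrite setU0 cardsU SR cards0 subn0 cS cR.
have -> : (n <= 3)%N by [].
lia.
Qed.

End Main.

End Field.

Unset Implicit Arguments.

Theorem theorem2p12 (F : finFieldType) (q n : nat) (alpha : F) :
  #|F| = (q ^ 2)%N ->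
  (q ^ 2 - 1)%N.-primitive_root alpha ->
  (2 <= n)%N ->
  orbitals F q n =
    [set Srel q n (alpha ^+ i) | i : 'I_(q ^ 2 - 1)]
    :|: [set Rrel q n (alpha ^+ i) | i : 'I_(q ^ 2 - 1)]
    :|: (if (4 <= n)%N then [set Trel F q n] else set0)
  /\ #|orbitals F q n| = (if (n <= 3)%N then 2 * q ^ 2 - 2 else 2 * q ^ 2 - 1)%N.
Proof.
move=> hF hal n2; split; [exact: (main_eq hF hal n2) | exact: (main_card hF hal n2)].
Qed.
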